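(* Let $L$ be a slim semimodular lattice with a fixed planar diagram, and let $K$ be a cover-preserving $\{0,1\}$-sublattice of $L$ (with the inherited subdiagram). Then $K$ is a slim semimodular lattice, $K$ is a region of $L$, and $K=\mathrm{rside}_L(C_l(K))\cap \mathrm{lside}_L(C_r(K))$.
   Context: All lattices are finite. $\mathrm{J}(L)$ is the set of nonzero join-irreducible elements; $L$ is slim if $\mathrm J(L)$ is the union of two chains (slim lattices are planar). A cover-preserving $\{0,1\}$-sublattice of $L$ is a sublattice containing $0_L,1_L$ such that $x\prec y$ in $K$ implies $x\prec y$ in $L$. For a fixed planar diagram, $C_l(\cdot)$ and $C_r(\cdot)$ denote the left and right boundary chains; for $K$ these are taken in the subdiagram of $K$ (they are maximal chains of $L$). For a maximal chain $C$ of $L$, $\mathrm{lside}_L(C)$ (resp. $\mathrm{rside}_L(C)$) is the set of elements of $L$ lying on the left (resp. right) of $C$ in the diagram, elements of $C$ included. A region of $L$ is a set of the form $\mathrm{rside}_L(C_1)\cap\mathrm{lside}_L(C_2)$ where $C_1,C_2$ are maximal chains with $C_1\subseteq\mathrm{lside}_L(C_2)$. *)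

(* Defs.v *)
From HB Require Import structures.
From mathcomp Require Import all_boot all_order.
Set Implicit Arguments. Unset Strict Implicit. Unset Printing Implicit Defensive.
Import Order.Theory.
Local Open Scope order_scope.

Section SlimDefs.
Context {disp : Order.disp_t} {L : finTBLatticeType disp}.

Definition incomp (x y : L) : bool := ~~ (x <= y) && ~~ (y <= x).

(* A (fixed) planar diagram of L, encoded up to similarity by its
   "left of" relation on incomparable pairs (Kelly--Rival):
   [lft x y] means "x lies to the left of y" in the diagram.  The axioms say
   that lft relates exactly the incomparable pairs, in exactly one direction,
   and that (<= or left-of) and (<= or right-of) are both transitive, i.e.
   they form a 2-dimensional realizer; such pairs correspond exactly to the
   planar diagrams of L up to similarity. *)
Definition planar_diagram (lft : rel L) : Prop :=
  [/\ forall x y, lft x y -> incomp x y,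
      forall x y, incomp x y -> lft x y || lft y x,
      forall x y, lft x y -> ~~ lft y x,
      forall x y z, (x <= y) || lft x y -> (y <= z) || lft y z ->
                    (x <= z) || lft x z &
      forall x y z, (x <= y) || lft y x -> (y <= z) || lft z y ->
                    (x <= z) || lft z x].

Definition chain (A : {set L}) : Prop :=
  {in A &, forall x y, (x <= y) || (y <= x)}.

Definition maximal_chain (C : {set L}) : Prop :=
  chain C /\ forall D : {set L}, chain D -> C \subset D -> D = C.

Definition cover_in (S : {set L}) (x y : L) : Prop :=
  [/\ x \in S, y \in S, x < y &
      forall z, z \in S -> x < z -> z < y -> False].

Definition sublattice01 (K : {set L}) : Prop :=
  [/\ \bot \in K, \top \in K,
      {in K &, forall x y, x `&` y \in K} &
      {in K &, forall x y, x `|` y \in K}].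

Definition cover_preserving (K : {set L}) : Prop :=
  forall x y, cover_in K x y -> cover_in [set: L] x y.

(* (upper) semimodularity of a sublattice S (joins computed in L = in S) *)
Definition semimodular_in (S : {set L}) : Prop :=
  forall a b c, a \in S -> b \in S -> c \in S -> cover_in S a b ->
    a `|` c = b `|` c \/ cover_in S (a `|` c) (b `|` c).

Definition join_irr_in (S : {set L}) (x : L) : Prop :=
  [/\ x \in S, x != \bot &
      forall y z, y \in S -> z \in S -> x = y `|` z -> x = y \/ x = z].

Definition slim_in (S : {set L}) : Prop :=
  exists C1 C2 : {set L},
    [/\ C1 \subset S, C2 \subset S, chain C1, chain C2 &
        forall x, join_irr_in S x <-> x \in C1 :|: C2].

Definition lside (lft : rel L) (C : {set L}) : {set L} :=
  [set x | (x \in C) || [exists c in C, lft x c]].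
Definition rside (lft : rel L) (C : {set L}) : {set L} :=
  [set x | (x \in C) || [exists c in C, lft c x]].

Definition region (lft : rel L) (R : {set L}) : Prop :=
  exists C1 C2 : {set L},
    [/\ maximal_chain C1, maximal_chain C2, C1 \subset lside lft C2 &
        R = rside lft C1 :&: lside lft C2].

Definition Cl (lft : rel L) (K : {set L}) : {set L} :=
  [set x in K | ~~ [exists y in K, lft y x]].
Definition Cr (lft : rel L) (K : {set L}) : {set L} :=
  [set x in K | ~~ [exists y in K, lft x y]].

End SlimDefs.

(* Main.v *)
Require Import Defs.
From HB Require Import structures.
From mathcomp Require Import all_boot all_order.
Import Order.Theory.
Local Open Scope order_scope.

Lemma ex_minf {T : finType} (P : pred T) (f : T -> nat) {x0} :
  P x0 -> exists2 m, P m & forall y, P y -> (f m <= f y)%N.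
Proof.
move=> Px0; case: (arg_minnP f Px0) => m Pm Hm; by exists m.
Qed.

Lemma ex_max_lt {disp : Order.disp_t} {L : finTBLatticeType disp} {S : {set L}} {x0 : L} :
  x0 \in S -> exists2 m, m \in S & forall y, y \in S -> ~~ (m < y).
Proof.
move=> Sx0.
have [m Sm Hm] := ex_minf (fun y => y \in S) (fun y => #|[set t | y < t]|) Sx0.
exists m => // y Sy; apply/negP => my.
have := Hm y Sy; rewrite leqNgt => /negP; apply.
apply: proper_card; apply/properP; split.
  by apply/subsetP => t; rewrite !inE => /(lt_trans my).
by exists y; rewrite !inE ?ltxx.
Qed.

Lemma ex_min_lt {disp : Order.disp_t} {L : finTBLatticeType disp} {S : {set L}} {x0 : L} :
  x0 \in S -> exists2 m, m \in S & forall y, y \in S -> ~~ (y < m).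
Proof.
move=> Sx0.
have [m Sm Hm] := ex_minf (fun y => y \in S) (fun y => #|[set t | t < y]|) Sx0.
exists m => // y Sy; apply/negP => my.
have := Hm y Sy; rewrite leqNgt => /negP; apply.
apply: proper_card; apply/properP; split.
  by apply/subsetP => t; rewrite !inE => /lt_trans; apply.
by exists y; rewrite !inE ?ltxx.
Qed.

Lemma pd_flip {disp : Order.disp_t} {L : finTBLatticeType disp} {lft : rel L} :
  planar_diagram lft -> planar_diagram (fun a b => lft b a).
Proof.
rewrite /planar_diagram; case=> h1 h2 h3 h4 h5; split => //.
- by move=> x y /h1; rewrite /incomp andbC.
- by move=> x y /h2; rewrite orbC.
- by move=> x y /h3.
Qed.

Lemma lft_incomp {disp : Order.disp_t} {L : finTBLatticeType disp} {lft : rel L} {x y : L} :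
  planar_diagram lft -> lft x y -> ~~ (x <= y) /\ ~~ (y <= x).
Proof. by case=> h1 _ _ _ _ /h1 /andP. Qed.

Lemma lft_asym {disp : Order.disp_t} {L : finTBLatticeType disp} {lft : rel L} {x y : L} :
  planar_diagram lft -> lft x y -> lft y x -> False.
Proof. by case=> _ _ h3 _ _ /h3 /negP. Qed.

Lemma lft_irr {disp : Order.disp_t} {L : finTBLatticeType disp} {lft : rel L} {x : L} :
  planar_diagram lft -> lft x x -> False.
Proof. by move=> pd /(lft_incomp pd); rewrite lexx; case. Qed.

Lemma P1 {disp : Order.disp_t} {L : finTBLatticeType disp} {lft : rel L} {p y r : L} :
  planar_diagram lft -> lft p y -> p <= r -> (y <= r) || lft r y.
Proof. by case=> _ _ _ _ h5 lpy pr; apply: (h5 y p r); rewrite ?lpy ?pr ?orbT. Qed.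

Lemma P2 {disp : Order.disp_t} {L : finTBLatticeType disp} {lft : rel L} {p y r : L} :
  planar_diagram lft -> lft p y -> r <= p -> (r <= y) || lft r y.
Proof. by case=> _ _ _ h4 _ lpy rp; apply: (h4 r p y); rewrite ?lpy ?rp ?orbT. Qed.

Lemma ji_exists {disp : Order.disp_t} {L : finTBLatticeType disp} {y q : L} :
  ~~ (y <= q) -> exists j, [/\ join_irr_in [set: L] j, j <= y & ~~ (j <= q)].
Proof.
move=> yq.
have Sy : y \in [set t | (t <= y) && ~~ (t <= q)] by rewrite inE lexx.
have [m] := ex_min_lt Sy.
rewrite inE => /andP[my mq] Hm; exists m; split => //; split => //.
- by apply/negP => /eqP m0; move: mq; rewrite m0 le0x.
move=> s t _ _ mst.
have sm : s <= m by rewrite mst leUl.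
have tm : t <= m by rewrite mst leUr.
case: (eqVneq m s) => [->|ms]; first by left.
case: (eqVneq m t) => [->|mt]; first by right.
exfalso; move: mq; rewrite mst leUx; apply/negP; rewrite negbK.
apply/andP; split.
  apply/negPn/negP => sq; have := Hm s; rewrite inE (le_trans sm my) sq.
  by rewrite lt_neqAle eq_sym ms sm => /(_ isT).
apply/negPn/negP => tq; have := Hm t; rewrite inE (le_trans tm my) tq.
by rewrite lt_neqAle eq_sym mt tm => /(_ isT).
Qed.

Lemma slim_three {disp : Order.disp_t} {L : finTBLatticeType disp} (q a b c : L) :
  slim_in [set: L] -> a `&` b = q -> a `&` c = q -> b `&` c = q ->
  ~~ (a <= q) -> ~~ (b <= q) -> ~~ (c <= q) -> False.
Proof.
move=> [C1 [C2 [_ _ ch1 ch2 HJ]]] ab ac bc aq bq cq.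
have [ja [Ja jaa jaq]] := ji_exists aq.
have [jb [Jb jbb jbq]] := ji_exists bq.
have [jc [Jc jcc jcq]] := ji_exists cq.
have nle : forall j k u v : L, j <= u -> k <= v -> u `&` v = q -> ~~ (j <= q) ->
    ~~ (k <= q) -> ~~ ((j <= k) || (k <= j)).
  move=> j k u v ju kv uv jq kq; rewrite negb_or; apply/andP; split.
    apply/negP => jk; move/negP: jq; apply; rewrite -uv lexI ju.
    exact: le_trans jk kv.
  apply/negP => kj; move/negP: kq; apply; rewrite -uv lexI kv andbT.
  exact: le_trans kj ju.
have nab := nle _ _ _ _ jaa jbb ab jaq jbq.
have nac := nle _ _ _ _ jaa jcc ac jaq jcq.
have nbc := nle _ _ _ _ jbb jcc bc jbq jcq.
move/HJ: Ja; move/HJ: Jb; move/HJ: Jc; rewrite !inE.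
case/orP=> hc; case/orP=> hb; case/orP=> ha.
all: first [ by move/negP: nab; apply; apply: ch1
           | by move/negP: nab; apply; apply: ch2
           | by move/negP: nac; apply; apply: ch1
           | by move/negP: nac; apply; apply: ch2
           | by move/negP: nbc; apply; apply: ch1
           | by move/negP: nbc; apply; apply: ch2 ].
Qed.

Lemma cover_meet {disp : Order.disp_t} {L : finTBLatticeType disp} (q U x : L) :
  cover_in [set: L] q U -> q <= x -> ~~ (U <= x) -> U `&` x = q.
Proof.
move=> [_ _ qU nb] qx Ux; apply/eqP; rewrite eq_le; apply/andP; split; last first.
  by rewrite lexI (ltW qU) qx.
apply/negPn/negP => h.
have qm : q < U `&` x.
  by rewrite lt_neqAle lexI (ltW qU) qx !andbT; apply/negP => /eqP e; move: h; rewrite -e lexx.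
apply: (nb (U `&` x)); rewrite ?in_setT //.
rewrite lt_neqAle leIl andbT; apply/negP => /eqP e; move/negP: Ux; apply.
by rewrite -e leIr.
Qed.

Lemma core3 {disp : Order.disp_t} {L : finTBLatticeType disp} (lft : rel L) (q U V x : L) :
  planar_diagram lft -> slim_in [set: L] ->
  cover_in [set: L] q U -> cover_in [set: L] q V -> q <= x -> q != x ->
  lft U x -> lft x V -> False.
Proof.
move=> pd sl cU cV qx nqx lU lV.
have [Ux _] := lft_incomp pd lU.
have [_ Vx] := lft_incomp pd lV.
have UV : ~~ (U <= V).
  apply/negP => UV; case: cV => _ _ qV nb.
  case: (eqVneq U V) => [eUV|nUV].
    by rewrite eUV in lU; apply: (lft_asym pd lU lV).
  apply: (nb U); rewrite ?in_setT //; first by case: cU.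
  by rewrite lt_neqAle nUV UV.
have qV : q <= V by case: cV => _ _ /ltW.
have qU : q <= U by case: cU => _ _ /ltW.
apply: (slim_three q U V x sl).
- exact: cover_meet cU qV UV.
- exact: cover_meet cU qx Ux.
- exact: cover_meet cV qx Vx.
- by case: cU => _ _; rewrite lt_leAnge => /andP[].
- by case: cV => _ _; rewrite lt_leAnge => /andP[].
- by apply/negP => xq; move/negP: nqx; apply; rewrite eq_le qx xq.
Qed.

Lemma lowcover {disp : Order.disp_t} {L : finTBLatticeType disp} (lft : rel L)
    (K : {set L}) (x c : L) :
  planar_diagram lft -> sublattice01 K -> cover_preserving K ->
  c \in K -> lft c x ->
  exists u q1, [/\ u \in K, q1 \in K, cover_in [set: L] q1 u, q1 <= x & lft u x].
Proof.
move=> pd [K0 K1 KI KU] cp cK lcx.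
have [cx _] := lft_incomp pd lcx.
have Sc : c \in [set y in K | (y <= c) && ~~ (y <= x)] by rewrite inE cK lexx.
have [u] := ex_min_lt Sc; rewrite inE => /andP[uK /andP[uc ux]] Hu.
have lux : lft u x.
  by have := P2 pd lcx uc; rewrite (negbTE ux).
have u0 : \bot < u.
  rewrite lt_neqAle le0x andbT; apply/negP => /eqP e; move: ux; rewrite -e le0x.
  done.
have T0 : \bot \in [set y in K | y < u] by rewrite inE K0.
have [q1] := ex_max_lt T0; rewrite inE => /andP[q1K q1u] Hq.
exists u, q1; split => //.
- apply: cp; split => // z zK q1z zu.
  by have := Hq z; rewrite inE zK zu q1z => /(_ isT).
- apply/negPn/negP => q1x.
  have := Hu q1; rewrite inE q1K q1x (le_trans (ltW q1u) uc) q1u.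
  by move=> /(_ isT).
Qed.

Lemma core2 {disp : Order.disp_t} {L : finTBLatticeType disp} (lft : rel L)
    (K : {set L}) (x c d : L) :
  planar_diagram lft -> slim_in [set: L] -> semimodular_in [set: L] ->
  sublattice01 K -> cover_preserving K ->
  c \in K -> d \in K -> lft c x -> lft x d ->
  (forall y z, y \in K -> z \in K -> x = y `|` z -> x = y \/ x = z) -> False.
Proof.
move=> pd sl sm subl cp cK dK lcx lxd H.
have pd' := pd_flip pd.
have [u [q1 [uK q1K cu q1x lux]]] := lowcover _ _ _ _ pd subl cp cK lcx.
have [v [q2 [vK q2K cv q2x lxv]]] := lowcover _ _ _ _ pd' subl cp dK lxd.
have [K0 K1 KI KU] := subl.
set q := q1 `|` q2.
have qK : q \in K by apply: KU.
have qx : q <= x by rewrite leUx q1x q2x.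
have q1u : q1 <= u by case: cu => _ _ /ltW.
have q2v : q2 <= v by case: cv => _ _ /ltW.
have [ux xu] := lft_incomp pd lux.
have [xv vx] := lft_incomp pd lxv.
have nqx : q != x.
  apply/negP => /eqP qe.
  case: (H q1 q2 q1K q2K (esym qe)) => e.
    by move/negP: xu; apply; rewrite e.
  by move/negP: xv; apply; rewrite e.
have step : forall (lf : rel L) (w q0 : L), planar_diagram lf -> w \in K -> q0 \in K ->
    cover_in [set: L] q0 w -> q0 <= q -> lf w x -> ~~ (x <= w) ->
    cover_in [set: L] q (w `|` q) /\ lf (w `|` q) x.
  move=> lf w q0 pdf wK q0K cw q0q lwx xw.
  have [wx _] := lft_incomp pdf lwx.
  have := sm q0 w q (in_setT _) (in_setT _) (in_setT _) cw.
  rewrite (join_r q0q) => -[e|cq].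
    by exfalso; move/negP: wx; apply; apply: le_trans qx; rewrite e leUl.
  split => //.
  have := P1 pdf lwx (leUl w q); case/orP => // xW.
  exfalso; case: (eqVneq x (w `|` q)) => [e|ne].
    case: (H w q wK qK e) => e'.
      by move/negP: xw; apply; rewrite e'.
    by move/eqP: nqx; apply; rewrite e'.
  case: cq => _ _ _ nb; apply: (nb x); rewrite ?in_setT //.
    by rewrite lt_neqAle nqx qx.
  by rewrite lt_neqAle ne xW.
have [cU lU] := step lft u q1 pd uK q1K cu (leUl _ _) lux xu.
have [cV lV] := step _ v q2 pd' vK q2K cv (leUr _ _) lxv xv.
exact: (core3 lft q (u `|` q) (v `|` q) x pd sl cU cV qx nqx lU lV).
Qed.

Lemma Cl_sub {disp : Order.disp_t} {L : finTBLatticeType disp} (lft : rel L) (K : {set L}) :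
  Cl lft K \subset K.
Proof. by apply/subsetP => x; rewrite inE => /andP[]. Qed.

Lemma Cl_noleft {disp : Order.disp_t} {L : finTBLatticeType disp} {lft : rel L}
    {K : {set L}} {z w : L} :
  z \in Cl lft K -> w \in K -> ~~ lft w z.
Proof.
rewrite inE => /andP[_ /existsPn H] wK; have := H w; by rewrite wK.
Qed.

Lemma Cl_chain {disp : Order.disp_t} {L : finTBLatticeType disp} (lft : rel L) (K : {set L}) :
  planar_diagram lft -> chain (Cl lft K).
Proof.
move=> pd x y xC yC; apply/negPn/negP; rewrite negb_or => inc.
have xK : x \in K by move: xC; rewrite inE => /andP[].
have yK : y \in K by move: yC; rewrite inE => /andP[].
case: pd => _ h2 _ _ _; case/orP: (h2 x y inc) => l.
  by move/negP: (Cl_noleft yC xK).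
by move/negP: (Cl_noleft xC yK).
Qed.

Lemma Cl_bt {disp : Order.disp_t} {L : finTBLatticeType disp} (lft : rel L) (K : {set L}) :
  planar_diagram lft -> sublattice01 K -> \bot \in Cl lft K /\ \top \in Cl lft K.
Proof.
move=> pd [K0 K1 _ _]; rewrite !inE K0 K1 /=; split; apply/existsPn => w;
  apply/negP => /andP[_ /(lft_incomp pd)].
  by rewrite le0x; case.
by rewrite lex1; case.
Qed.

Lemma lam_lt {disp : Order.disp_t} {L : finTBLatticeType disp} (lft : rel L) (w y : L) :
  planar_diagram lft -> lft w y ->
  (#|[set t : L | (t <= w)%O || lft t w]| < #|[set t : L | (t <= y)%O || lft t y]|)%N.
Proof.
move=> pd lwy; have pd0 := pd; case: pd0 => _ _ _ h4 _.
apply: proper_card; apply/properP; split.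
  apply/subsetP => t; rewrite !inE => tw; apply: (h4 t w y tw).
  by rewrite lwy orbT.
exists y; rewrite !inE ?lexx //.
have [wy yw] := lft_incomp pd lwy.
rewrite negb_or yw /=; apply/negP => lyw; exact: (lft_asym pd lwy lyw).
Qed.

Lemma Cl_max {disp : Order.disp_t} {L : finTBLatticeType disp} (lft : rel L) (K : {set L}) :
  planar_diagram lft -> sublattice01 K -> cover_preserving K ->
  maximal_chain (Cl lft K).
Proof.
move=> pd subl cp; split; first exact: Cl_chain.
move=> D chD sub; apply/setP => d; apply/idP/idP; last exact: (subsetP sub).
move=> dD; apply/negPn/negP => dC.
have [C0 C1] := Cl_bt _ _ pd subl.
have X0 : \bot \in [set c in Cl lft K | c <= d] by rewrite inE C0 le0x.
have Z0 : \top \in [set c in Cl lft K | d <= c] by rewrite inE C1 lex1.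
have [x] := ex_max_lt X0; rewrite inE => /andP[xC xd] Hx.
have [z] := ex_min_lt Z0; rewrite inE => /andP[zC dz] Hz.
have chC := Cl_chain lft K pd.
have F : forall c, c \in Cl lft K -> c <= d -> c <= x.
  move=> c cC cd; case/orP: (chC _ _ cC xC) => // xc.
  case: (eqVneq x c) => [->|ne] //.
  by have := Hx c; rewrite inE cC cd lt_neqAle ne xc => /(_ isT).
have G : forall c, c \in Cl lft K -> d <= c -> z <= c.
  move=> c cC dc; case/orP: (chC _ _ cC zC) => // cz.
  case: (eqVneq c z) => [->|ne] //.
  by have := Hz c; rewrite inE cC dc lt_neqAle ne cz => /(_ isT).
have xK : x \in K by apply: (subsetP (Cl_sub lft K)).
have zK : z \in K by apply: (subsetP (Cl_sub lft K)).
have xd' : x < d by rewrite lt_neqAle xd andbT; apply/negP => /eqP e; move: dC; rewrite -e xC.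
have dz' : d < z by rewrite lt_neqAle dz andbT; apply/negP => /eqP e; move: dC; rewrite e zC.
have cK : cover_in K x z.
  split => //; first exact: lt_trans xd' dz'.
  move=> y0 y0K xy0 y0z.
  have Y0 : y0 \in [set y in K | (x < y) && (y < z)] by rewrite inE y0K xy0 y0z.
  have [y] := ex_minf (fun y => y \in [set y in K | (x < y) && (y < z)])
     (fun y => #|[set t | (t <= y) || lft t y]|) Y0.
  rewrite inE => /andP[yK /andP[xy yz]] Hy.
  have yC : y \in Cl lft K.
    rewrite inE yK /=; apply/existsP => -[w /andP[wK lwy]].
    have [wy yw] := lft_incomp pd lwy.
    have wz : w <= z.
      have pd0 := pd; case: pd0 => _ _ _ h4 _.
      have := h4 w y z; rewrite lwy orbT (ltW yz) => /(_ isT isT).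
      by case/orP => // lwz; move/negP: (Cl_noleft zC wK).
    case: (boolP (x <= w)) => xw.
      have xw' : x < w.
        rewrite lt_neqAle xw andbT; apply/negP => /eqP e.
        by move/negP: wy; apply; first [rewrite -e (ltW xy) | rewrite e (ltW xy)].
      have wz' : w < z.
        rewrite lt_neqAle wz andbT; apply/negP => /eqP e.
        by move/negP: yw; apply; first [rewrite -e (ltW yz) | rewrite e (ltW yz)].
      have := Hy w; rewrite inE wK xw' wz' => /(_ isT).
      by rewrite leqNgt (lam_lt _ _ _ pd lwy).
    have wx : ~~ (w <= x).
      by apply/negP => wx; move/negP: wy; apply; apply: le_trans wx (ltW xy).
    have pd0 := pd; case: pd0 => _ h2 _ _ h5.
    have : incomp x w by rewrite /incomp xw wx.
    case/h2/orP => l; last by move/negP: (Cl_noleft xC wK).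
    have := h5 w x y; rewrite l orbT (ltW xy) => /(_ isT isT).
    case/orP => [wy'|lyw]; first by move/negP: wy.
    exact: (lft_asym pd lwy lyw).
  have yD : y \in D by apply: (subsetP sub).
  case/orP: (chD _ _ yD dD) => h.
    by have := F y yC h; rewrite (lt_geF xy).
  by have := G y yC h; rewrite (lt_geF yz).
case: (cp _ _ cK) => _ _ _ nb; exact: (nb d (in_setT _) xd' dz').
Qed.

Lemma maxch_incomp {disp : Order.disp_t} {L : finTBLatticeType disp} (C : {set L}) (x : L) :
  maximal_chain C -> x \notin C -> exists2 c, c \in C & incomp c x.
Proof.
move=> [chC mC] xC.
case: (boolP [exists c in C, incomp c x]) => [/exists_inP[c cC ic]|/exists_inPn H].
  by exists c.
exfalso; move/negP: xC; apply.
have chD : chain (x |: C).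
  move=> a b; rewrite !inE => /orP[/eqP->|aC] /orP[/eqP->|bC].
  - by rewrite lexx.
  - by have := H b bC; rewrite /incomp negb_and !negbK orbC.
  - by have := H a aC; rewrite /incomp negb_and !negbK.
  - exact: chC.
by rewrite -(mC _ chD (subsetUr _ _)) setU11.
Qed.

Definition jib {disp : Order.disp_t} {L : finTBLatticeType disp} (S : {set L}) (x : L) : bool :=
  [&& x \in S, x != \bot & [forall y, forall z,
     [&& y \in S, z \in S & x == y `|` z] ==> (x == y) || (x == z)]].

Lemma jibP {disp : Order.disp_t} {L : finTBLatticeType disp} (S : {set L}) (x : L) :
  reflect (join_irr_in S x) (jib S x).
Proof.
apply: (iffP and3P) => [[xS x0 /forallP H]|[xS x0 H]]; split => //.
  move=> y z yS zS e; have := H y => /forallP /(_ z); rewrite yS zS e eqxx /=.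
  by case/orP => /eqP ->; [left|right].
apply/forallP => y; apply/forallP => z; apply/implyP => /and3P[yS zS /eqP e].
by case: (H y z yS zS e) => ->; rewrite eqxx ?orbT.
Qed.

Lemma K_rside {disp : Order.disp_t} {L : finTBLatticeType disp} (lft : rel L) (K : {set L}) (k : L) :
  planar_diagram lft -> maximal_chain (Cl lft K) -> k \in K -> k \in rside lft (Cl lft K).
Proof.
move=> pd mC kK; rewrite inE; case: (boolP (k \in Cl lft K)) => //= kC.
have [c cC ic] := maxch_incomp _ _ mC kC.
apply/exists_inP; exists c => //.
case: pd => _ h2 _ _ _; case/orP: (h2 c k ic) => // lkc.
by move/negP: (Cl_noleft cC kK).
Qed.

Theorem mainTheorem3 (disp : Order.disp_t) (L : finTBLatticeType disp)
    (lft : rel L) (K : {set L}) :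
  planar_diagram lft ->
  slim_in [set: L] -> semimodular_in [set: L] ->
  sublattice01 K -> cover_preserving K ->
  [/\ slim_in K, semimodular_in K, region lft K &
      K = rside lft (Cl lft K) :&: lside lft (Cr lft K)].
Proof.
move=> pd sl sm subl cp.
have pd' := pd_flip pd.
have mCl := Cl_max lft K pd subl cp.
have mCr : maximal_chain (Cr lft K) := Cl_max _ K pd' subl cp.
have Kr : forall k, k \in K -> k \in rside lft (Cl lft K).
  by move=> k; apply: K_rside.
have Kl : forall k, k \in K -> k \in lside lft (Cr lft K).
  by move=> k; apply: (K_rside _ K k pd' mCr).
have ClK := Cl_sub lft K.
have CrK : Cr lft K \subset K := Cl_sub _ K.
have [K0 K1 KI KU] := subl.
have eqK : K = rside lft (Cl lft K) :&: lside lft (Cr lft K).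
  apply/setP => x; apply/idP/idP => [xK|]; first by rewrite inE Kr ?Kl.
  rewrite !inE => /andP[hr hl]; apply/negPn/negP => xK.
  case/orP: hr => [/andP[xK' _] | /exists_inP [c cCl lcx]].
    by rewrite xK' in xK.
  case/orP: hl => [/andP[xK' _] | /exists_inP [d dCr lxd]].
    by rewrite xK' in xK.
  have cK : c \in K by move: cCl; rewrite ?inE => /andP[].
  have dK : d \in K by move: dCr; rewrite ?inE => /andP[].
  apply: (core2 lft K x c d pd sl sm subl cp cK dK lcx lxd).
  move=> y z yK zK e; exfalso; move/negP: xK; apply; rewrite e; exact: KU.
split => //.
- exists [set x in Cl lft K | jib K x], [set x in Cr lft K | jib K x]; split.
  + by apply/subsetP => x; rewrite inE => /andP[/(subsetP ClK)].
  + by apply/subsetP => x; rewrite inE => /andP[/(subsetP CrK)].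
  + by apply: (sub_in2 _ (Cl_chain lft K pd)) => x /setIdP[].
  + by apply: (sub_in2 _ (Cl_chain _ K pd')) => x /setIdP[].
  + move=> x; split; last first.
      by rewrite !inE => /orP[] /andP[_ /jibP].
    move=> ji; have := ji; move/jibP => jb; case: ji => xK _ H.
    case: (boolP (x \in Cl lft K)) => xCl.
      by apply/setUP; left; apply/setIdP.
    case: (boolP (x \in Cr lft K)) => xCr.
      by apply/setUP; right; apply/setIdP.
    exfalso.
    move: xCl; rewrite inE xK /= negbK => /exists_inP[c cK lcx].
    move: xCr; rewrite inE xK /= negbK => /exists_inP[d dK lxd].
    exact: (core2 lft K x c d pd sl sm subl cp cK dK lcx lxd H).
- move=> a b c aK bK cK cab.
  have cab' := cp _ _ cab.
  case: (sm a b c (in_setT _) (in_setT _) (in_setT _) cab') => [e|cv]; first by left.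
  right; case: cv => _ _ lt nb; split => //; try exact: KU.
  by move=> z zK; apply: nb; rewrite in_setT.
- exists (Cl lft K), (Cr lft K); split => //.
  by apply/subsetP => x /(subsetP ClK) /Kl.
Qed.
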